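(* Let $N$ be a finite index set and let $\{y_k\}_{k\ge0}$ be a (possibly random) sequence of vectors in $\mathbb{R}^N$ whose entries satisfy, for all $k$ and $n\in N$, $$y_{k+1}(n)\ge(1-\beta_k(n))\,y_k(n)+\beta_k(n)\big(\gamma\min_{m\in N}y_k(m)-e_k(n)\big),$$ where $\gamma\in(0,1)$, the step sizes $\beta_k(n)\in[0,1]$ decay to zero with $\sum_{k=0}^\infty\beta_k(n)=\infty$, and the errors satisfy $e_k(n)\to c$ as $k\to\infty$ almost surely for each $n$, for some $c\ge0$. Suppose $y_k(n)\ge-M$ for some $M\ge0$ for all $k$ and $n$. Then $$\liminf_{k\to\infty}y_k(n)\ge-\frac{c}{1-\gamma}$$ almost surely for each $n$. *)

(* Defs.v *)
From HB Require Import structures.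
From mathcomp Require Import all_boot all_order all_algebra.
From mathcomp Require Import all_classical all_reals all_analysis.
Set Implicit Arguments. Unset Strict Implicit. Unset Printing Implicit Defensive.
Import Order.TTheory GRing.Theory Num.Theory.
Local Open Scope ring_scope.

(* Minimum of f over a nonempty finite index type N; n0 is any element of N
   (used only as the seed of the fold; the value does not depend on it). *)
Definition minN (N : finType) (R : realType) (n0 : N) (f : N -> R) : R :=
  \big[Num.min/f n0]_(m : N) f m.

(* Main.v *)
Require Import Defs.
From HB Require Import structures.
From mathcomp Require Import all_boot all_order all_algebra.
From mathcomp Require Import all_classical all_reals all_analysis.
From mathcomp Require Import ring lra.
Import Order.TTheory GRing.Theory Num.Theory numFieldNormedType.Exports.
Local Open Scope ring_scope.
Local Open Scope classical_set_scope.
Lemma div_sum (R : realType) (beta : nat -> R) :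
  (forall k, 0 <= beta k) ->
  (\sum_(0 <= k <oo) (beta k)%:E = +oo)%E ->
  forall A, exists n, A <= \sum_(0 <= j < n) beta j.
Proof.
move=> b0 hs A; apply/not_existsP => hn.
have : (\sum_(0 <= k <oo) (beta k)%:E <= A%:E)%E.
  apply: lime_le; first by apply: is_cvg_nneseries => n _ _; rewrite lee_fin.
  apply: nearW => n /=; rewrite sumEFin lee_fin.
  by have := hn n; rewrite leNgt => /negP/negbNE/ltW.
by rewrite hs leye_eq.
Qed.

Lemma psum_mono {R : realType} (beta : nat -> R) :
  (forall k, 0 <= beta k) -> forall m n, (m <= n)%N ->
  \sum_(0 <= j < m) beta j <= \sum_(0 <= j < n) beta j.
Proof.
move=> b0 m n mn; rewrite (big_cat_nat (leq0n m) mn) /= lerDl.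
by apply: sumr_ge0 => i _.
Qed.

Lemma det_one (R : realType) (z beta : nat -> R) (b : R) (K : nat) :
  (forall k, 0 <= beta k <= 1) ->
  (forall A, exists n, A <= \sum_(0 <= j < n) beta j) ->
  (forall k, (K <= k)%N -> (1 - beta k) * z k + beta k * b <= z k.+1) ->
  forall d, 0 < d -> exists K', forall k, (K' <= k)%N -> b - d <= z k.
Proof.
move=> hb hdiv hz d d0.
have b0 k : 0 <= beta k by case/andP: (hb k).
pose u k := Num.min (z k - b) 0.
have ule k : u k <= 0 by rewrite /u ge_min lexx orbT.
have ule2 k : u k <= z k - b by rewrite /u ge_min lexx.
have ustep k : (K <= k)%N -> (1 - beta k) * u k <= u k.+1.
  move=> Kk; have := hz k Kk; case/andP: (hb k) => h1 h2 hzk.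
  rewrite /u; case: (leP (z k.+1 - b) 0) => h.
    apply: le_trans (_ : (1 - beta k) * (z k - b) <= _).
      by apply: ler_wpM2l; [lra| exact: ule2].
    lra.
  have : (1 - beta k) * u k <= 0 by apply: mulr_ge0_le0; [lra| exact: ule].
  by rewrite /u; move=> ->.
have claim i : u K <= u (K + i)%N * (1 + \sum_(K <= j < K + i) beta j).
  elim: i => [|i IH]; first by rewrite addn0 big_geq // addr0 mulr1.
  rewrite addnS big_nat_recr /=; last by rewrite leq_addr.
  set S := \sum_(K <= j < K + i) beta j in IH *.
  have S0 : 0 <= S by apply: sumr_ge0.
  have hs := ustep (K + i)%N (leq_addr _ _).
  have hu := ule (K + i)%N.
  have hb1 := hb (K + i)%N.
  set bb := beta (K + i)%N in hs hb1 *.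
  set v := u (K + i)%N in hs hu IH *.
  set v' := u (K + i).+1 in hs *.
  case/andP: hb1 => hb1 hb2.
  apply: (le_trans IH).
  have h1 : v * (1 + S) <= (1 - bb) * v * (1 + (S + bb)).
    have -> : (1 - bb) * v * (1 + (S + bb)) = v * ((1 - bb) * (1 + S + bb)) by ring.
    apply: ler_wnM2l => //; nra.
  apply: (le_trans h1); apply: ler_wpM2r; first lra.
  exact: hs.
have W0 : 0 <= - u K by rewrite oppr_ge0.
have [n hn] := hdiv (- u K / d + \sum_(0 <= j < K) beta j).
exists (maxn n K) => k; rewrite geq_max => /andP[nk Kk].
have [i ?] : exists i, k = (K + i)%N by exists (k - K)%N; rewrite subnKC.
subst k.
have := claim i.
have hsum : - u K / d <= \sum_(K <= j < K + i) beta j.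
  
  have hm := psum_mono beta b0 _ _ nk.
  have : \sum_(0 <= j < K + i) beta j = \sum_(0 <= j < K) beta j + \sum_(K <= j < K + i) beta j.
    by rewrite (big_cat_nat (leq0n K) (leq_addr i K)).
  lra.
have := ule2 (K + i)%N.
set S := \sum_(K <= j < K + i) beta j in hsum *.
set v := u (K + i)%N.
move=> h2 h3.
have : - u K <= d * S.
  by rewrite -ler_pdivrMl // mulrC.
have := ule (K + i)%N; rewrite -/v => h4.
have S0 : 0 <= S by apply: sumr_ge0.
move=> h5.
suff : - d <= v by lra.
rewrite leNgt; apply/negP => hv.
have : v * (1 + S) < - d * (1 + S) by rewrite ltr_pM2r //; lra.
nra.
Qed.

Lemma minN_ge (R : realType) (N : finType) (n0 : N) (f : N -> R) a :
  (forall n, a <= f n) -> a <= minN n0 f.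
Proof.
move=> h; rewrite /minN; apply: (big_ind (fun x => a <= x)) => //.
by move=> x y hx hy; rewrite le_min hx hy.
Qed.

Lemma max_bound (N : finType) (K : N -> nat) n : (K n <= \max_(m : N) K m)%N.
Proof. by apply: (@leq_bigmax_cond _ _ (fun m => K m) n). Qed.

Lemma det_all (R : realType) (N : finType) (n0 : N) (y beta e : nat -> N -> R)
  (gamma c M : R) :
  0 < gamma < 1 ->
  (forall k n, 0 <= beta k n <= 1) ->
  (forall n A, exists m, A <= \sum_(0 <= j < m) beta j n) ->
  (forall n eps, 0 < eps -> exists K, forall k, (K <= k)%N -> e k n <= c + eps) ->
  (forall k n, y k.+1 n >= (1 - beta k n) * y k n
       + beta k n * (gamma * minN n0 (y k) - e k n)) ->
  (forall k n, y k n >= - M) ->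
  forall d, 0 < d -> exists K, forall k n, (K <= k)%N -> - (c / (1 - gamma)) - d <= y k n.
Proof.
move=> /andP[g0 g1] hb hdiv he hrec hM.
pose EB a := exists K, forall k n, (K <= k)%N -> a <= y k n.
have EBmono a a' : a' <= a -> EB a -> EB a'.
  by move=> aa [K hK]; exists K => k n Kk; apply: le_trans aa (hK k n Kk).
have step a eta : 0 < eta -> EB a -> EB (gamma * a - c - eta).
  move=> eta0 [K1 hK1].
  have he2 n := he n (eta / 2) ltac:(lra).
  pose K2 n := projT1 (cid (he2 n)).
  have hK2 n k : (K2 n <= k)%N -> e k n <= c + eta / 2 := projT2 (cid (he2 n)) k.
  pose Kb := maxn K1 (\max_(n : N) K2 n).
  have hone n : exists K', forall k, (K' <= k)%N -> gamma * a - c - eta / 2 - eta / 2 <= y k n.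
    apply: (@det_one R (fun k => y k n) (fun k => beta k n) _ Kb) => //; last by lra.
    move=> k; rewrite geq_max => /andP[h1 h2].
    have hm : a <= minN n0 (y k) by apply: minN_ge => m; apply: hK1.
    have hek : e k n <= c + eta / 2.
      by apply: hK2; apply: leq_trans h2; apply: max_bound.
    apply: le_trans (hrec k n); rewrite lerD2l; apply: ler_wpM2l; first by case/andP: (hb k n).
    have : gamma * a <= gamma * minN n0 (y k) by apply: ler_wpM2l => //; lra.
    lra.
  pose K3 n := projT1 (cid (hone n)).
  exists (\max_(n : N) K3 n) => k n hk.
  have := projT2 (cid (hone n)) k (leq_trans (@max_bound _ K3 n) hk).
  lra.
move=> d d0.
set L := - (c / (1 - gamma)).
have hL : gamma * L - c = L.
  rewrite /L; field; lra.
pose h := (1 - gamma) * d / 2.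
have h0 : 0 < h by rewrite /h; apply: divr_gt0 => //; apply: mulr_gt0 => //; lra.
have claim j : EB (Num.min (L - d) (- M + j%:R * h)).
  elim: j => [|j IH].
    exists 0%N => k n _; rewrite ge_min; apply/orP; right; rewrite mul0r addr0; exact: hM.
  apply: EBmono (step _ h h0 IH).
  case: (leP (L - d) (- M + j%:R * h)) => hc.
    rewrite ge_min; apply/orP; left.
    have : (1 - gamma) * d / 2 = h by [].
    nra.
  rewrite ge_min; apply/orP; right.
  rewrite -natr1 mulrDl mul1r.
  have : (1 - gamma) * d / 2 = h by [].
  nra.
have [K hK] := claim (Num.truncn ((L - d + M) / h)).+1.
exists K => k n Kk; have := hK k n Kk.
have := Num.Theory.truncnS_gt ((L - d + M) / h).
set t := (Num.truncn _).+1%:R.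
rewrite ltr_pdivrMr // => ht.
rewrite ge_min => /orP[] //.
lra.
Qed.

Theorem lemma3 (R : realType) (d : measure_display) (Omega : measurableType d)
  (P : probability Omega R) (N : finType) (n0 : N)
  (y beta e : Omega -> nat -> N -> R) (gamma c M : R) :
  0 < gamma < 1 -> 0 <= c -> 0 <= M ->
  (forall w k n, 0 <= beta w k n <= 1) ->
  (forall w n, (fun k => beta w k n) @ \oo --> (0:R)) ->
  (forall w n, (\sum_(0 <= k <oo) (beta w k n)%:E = +oo)%E) ->
  (forall n, {ae P, forall w, (fun k => e w k n) @ \oo --> (c:R)}) ->
  (forall w k n, y w k.+1 n >= (1 - beta w k n) * y w k n
       + beta w k n * (gamma * minN n0 (y w k) - e w k n)) ->
  (forall w k n, y w k n >= - M) ->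
  forall n, {ae P, forall w,
    (limn_einf (fun k => (y w k n)%:E) >= (- (c / (1 - gamma)))%:E)%E}.
Proof.
move=> hg hc hM hb _ hs he hrec hyM n.
have hall := @ae_foralln _ _ _ _ (fun j w => (fun k => e w k (nth n0 (enum N) j)) @ \oo --> (c:R))
  (fun j => he (nth n0 (enum N) j)).
apply: filterS hall => w hw.
have hw' m : (fun k => e w k m) @ \oo --> (c:R).
  by have := hw (index m (enum N)); rewrite nth_index // mem_enum.
have he' m eps : 0 < eps -> exists K, forall k, (K <= k)%N -> e w k m <= c + eps.
  move=> eps0; have := (cvgrPdist_lt _ _).1 (hw' m) eps eps0.
  move=> [K _ hK]; exists K => k Kk; have := hK k Kk => /=.
  rewrite ltr_norml; lra.
have hdiv m A : exists j, A <= \sum_(0 <= i < j) beta w i m.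
  apply: (@div_sum R (fun i => beta w i m)) => //.
  by move=> k; case/andP: (hb w k m).
have hdet := @det_all R N n0 (y w) (beta w) (e w) gamma c M hg (hb w) hdiv he' (hrec w) (hyM w).
apply/lee_subgt0Pr => dd dd0.
rewrite limn_einf_lim; apply: lime_ge; first exact: is_cvg_einfs.
have [K hK] := hdet dd dd0.
exists K => // m Km /=.
apply: le_ereal_inf_tmp => _ [k /= mk <-].
rewrite -EFinB lee_fin; apply: hK; exact: leq_trans Km mk.
Qed.
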